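(* In the setting described in the context, assume $3$ divides $q^2+q+1$, let $d=3$ and $t=\frac13(q^2+q+1)$. Then $w_u\le2$ for every $u$. Moreover, for $j=0,1,2$, the number $v_j$ of indices $u\in\{0,\dots,t-1\}$ with $w_u=j$ is $v_0=\frac13(q^2-2q+1)$, $v_1=q-1$, $v_2=1$.
   Context: Let $q=p^h$ with $p$ prime, $h\ge1$. Let $\alpha$ be a primitive element of $\mathbb{F}_{q^3}$; the points of $PG(2,q)$ are the 1-dimensional $\mathbb{F}_q$-subspaces of $\mathbb{F}_{q^3}$, and $P_i$ denotes the point represented by $\alpha^i$, so $PG(2,q)=\{P_0,\dots,P_{q^2+q}\}$. Let $\tau:P_i\mapsto P_{ip\bmod(q^2+q+1)}$ (a collineation) and let $\ell_0$ be a line of $PG(2,q)$ fixed by $\tau$. For a positive divisor $t$ of $q^2+q+1$ and $i=0,\dots,t-1$ let $O_i=\{P_u:u\equiv i\pmod t\}$, and for $u=0,\dots,t-1$ let $w_u=|\ell_0\cap O_u|$. *)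

(* Defs.v *)
From HB Require Import structures.
From mathcomp Require Import all_boot all_order all_algebra all_field.
Set Implicit Arguments. Unset Strict Implicit. Unset Printing Implicit Defensive.
Import GRing.Theory.
Local Open Scope ring_scope.

Definition subfieldq (L : finFieldType) (q : nat) : {set L} :=
  [set c : L | c ^+ q == c].

Definition Fq_subspace (L : finFieldType) (q : nat) (S : {set L}) : Prop :=
  [/\ (0 : L) \in S,
      (forall x y, x \in S -> y \in S -> x + y \in S) &
      (forall c x, c \in subfieldq L q -> x \in S -> c * x \in S)].

(* A line of PG(2,q) = a 2-dimensional F_q-subspace of F_{q^3},
   i.e. an F_q-subspace with q^2 elements. *)
Definition PG_line (L : finFieldType) (q : nat) (S : {set L}) : Prop :=
  Fq_subspace q S /\ #|S| = (q ^ 2)%N.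

(* w_u = |l ∩ O_u|: number of points P_i (0 <= i < q^2+q+1) with i = u mod t
   lying on l (P_i lies on l iff its representative alpha^i is in l). *)
Definition wcount (L : finFieldType) (q t : nat) (alpha : L) (l : {set L})
  (u : nat) : nat :=
  #|[set i : 'I_(q ^ 2 + q + 1) | (i %% t == u)%N && (alpha ^+ i \in l)]|.

(* Main.v *)
Require Import Defs.
From HB Require Import structures.
From mathcomp Require Import all_boot all_order all_algebra all_field.
From mathcomp Require Import zify ring.
Set Implicit Arguments. Unset Strict Implicit. Unset Printing Implicit Defensive.
Import GRing.Theory.
Local Open Scope ring_scope.

Section Alg.
Variables (L : finFieldType) (q : nat) (alpha : L) (l : {set L}).
Hypothesis q2 : (1 < q)%N.
Hypothesis cardL : #|L| = (q ^ 3)%N.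
Hypothesis prim : ((q ^ 3).-1).-primitive_root alpha.
Hypothesis frob : forall x y : L, (x + y) ^+ q = x ^+ q + y ^+ q.
Hypothesis line : PG_line q l.

Let n := ((q ^ 3).-1)%N.
Let N := (q ^ 2 + q + 1)%N.

Lemma nN : n = ((q - 1) * N)%N.
Proof. rewrite /n /N -subn1 !expnS expn0 !muln1; nia. Qed.

Lemma n_gt0 : (0 < n)%N.
Proof. rewrite nN /N; nia. Qed.

Lemma aeq a b : (alpha ^+ a == alpha ^+ b) = (a == b %[mod n]).
Proof. exact: eq_prim_root_expr. Qed.

Lemma alpha_neq0 : alpha != 0.
Proof.
apply/eqP => a0; have := prim_expr_order prim; rewrite a0 expr0n.
have := n_gt0; rewrite /n => /gtn_eqF -> /eqP; by rewrite eq_sym oner_eq0.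
Qed.

Lemma frobN (x : L) : (- x) ^+ q = - (x ^+ q).
Proof.
apply/eqP; rewrite -subr_eq0 opprK -frob addNr expr0n; by case: q q2.
Qed.

Lemma frobB (x y : L) : (x - y) ^+ q = x ^+ q - y ^+ q.
Proof. by rewrite frob frobN. Qed.

Lemma inFq (c : L) : (c \in subfieldq L q) = (c ^+ q == c).
Proof. by rewrite inE. Qed.

Lemma l0 : (0 : L) \in l. Proof. by case: line => -[]. Qed.
Lemma lD (x y : L) : x \in l -> y \in l -> x + y \in l. Proof. by case: line => -[_ H _] _; apply: H. Qed.
Lemma lZ (c x : L) : c \in subfieldq L q -> x \in l -> c * x \in l. Proof. by case: line => -[_ _ H] _; apply: H. Qed.
Lemma lcard : #|l| = (q ^ 2)%N. Proof. by case: line. Qed.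

Lemma Fq_m1 : (-1 : L) \in subfieldq L q.
Proof. by rewrite inFq frobN expr1n. Qed.

Lemma lN (x : L) : x \in l -> - x \in l.
Proof. by move=> xl; rewrite -mulN1r lZ // Fq_m1. Qed.

Lemma lB (x y : L) : x \in l -> y \in l -> x - y \in l.
Proof. by move=> xl yl; rewrite lD // lN. Qed.

Lemma Fq_aN j : alpha ^+ (j * N) \in subfieldq L q.
Proof.
rewrite inFq -exprM aeq; apply/eqP.
have -> : (j * N * q = j * n + j * N)%N by rewrite nN; nia.
by rewrite modnMDl.
Qed.

Lemma pow_of (x : L) : x != 0 -> {k : 'I_n | x = alpha ^+ k}.
Proof.
move=> x0; have H : x ^+ n = 1.
  apply: (mulIf x0); rewrite mul1r -exprSr.
  have := expf_card x; rewrite cardL.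
  by have -> : (q ^ 3 = n.+1)%N by rewrite /n prednK // expn_gt0 (ltn_trans _ q2).
exact: (prim_rootP prim H).
Qed.

Lemma memP k : (alpha ^+ k \in l) = (alpha ^+ (k %% N) \in l).
Proof.
apply/idP/idP => H.
- have -> : alpha ^+ (k %% N) = alpha ^+ ((k %/ N) * (q - 2) * N) * alpha ^+ k.
    rewrite -exprD; apply/eqP; rewrite aeq; apply/eqP.
    have -> : ((k %/ N) * (q - 2) * N + k = (k %/ N) * n + k %% N)%N.
      rewrite nN; move: (div.divn_eq k N); move: (k %/ N)%N (k %% N)%N => a b ->; rewrite /N.
      have [r ->] : exists r, q = r.+2 by exists (q-2)%N; lia.
      rewrite !subSS !subn0; ring.
    by rewrite modnMDl.
  by rewrite lZ // Fq_aN.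
- by rewrite (div.divn_eq k N) exprD lZ // Fq_aN.
Qed.

Lemma memE a b : (a %% N = b %% N)%N -> (alpha ^+ a \in l) = (alpha ^+ b \in l).
Proof. by move=> E; rewrite memP E -memP. Qed.


Lemma FqB (a b : L) : a \in subfieldq L q -> b \in subfieldq L q -> a - b \in subfieldq L q.
Proof. by rewrite !inFq frobB => /eqP -> /eqP ->. Qed.
Lemma FqM (a b : L) : a \in subfieldq L q -> b \in subfieldq L q -> a * b \in subfieldq L q.
Proof. by rewrite !inFq exprMn => /eqP -> /eqP ->. Qed.
Lemma FqV (a : L) : a \in subfieldq L q -> a^-1 \in subfieldq L q.
Proof. by rewrite !inFq exprVn => /eqP ->. Qed.

Lemma Fq_detect a b (c : L) : c \in subfieldq L q -> alpha ^+ a = c * alpha ^+ b ->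
  (a %% N = b %% N)%N.
Proof.
move=> cF E.
have c0 : c != 0.
  apply/eqP => c0; move: E; rewrite c0 mul0r => /eqP; by rewrite expf_eq0 (negbTE alpha_neq0) andbF.
have [[m _] /= cm] := pow_of c0.
have Nm : (N %| m)%N.
  move: cF; rewrite inFq cm -exprM aeq.
  have -> : (m * q = m + m * (q - 1))%N by have := q2; nia.
  rewrite -{3}(addn0 m) eqn_modDl mod0n => /eqP H.
  have : (n %| m * (q - 1))%N by rewrite /dvdn H.
  by rewrite nN [(m * _)%N]mulnC dvdn_pmul2l // subn_gt0.
move: E; rewrite cm -exprD => /eqP; rewrite aeq => /eqP E.
have Nn : (N %| n)%N by rewrite nN dvdn_mull.
rewrite -(modn_dvdm a Nn) E (modn_dvdm _ Nn).
by case/dvdnP: Nm => k ->; rewrite modnMDl.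
Qed.

Lemma key1 (beta : L) : beta != 0 -> exists z : L, [/\ z != 0, z \in l & beta * z \in l].
Proof.
move=> b0.
case: (pickP [pred z : L | (z != 0) && (z \in l) && (beta * z \in l)]) => [z /= /andP[/andP[? ?] ?] | H].
  by exists z.
exfalso.
pose l' := (fun z => z / beta) @: l.
have cl' : #|l'| = (q ^ 2)%N.
  rewrite card_imset ?lcard // => u v /= /mulIf; apply; by rewrite invr_eq0.
pose D := setX l l'.
pose f := fun pr : L * L => pr.1 + pr.2.
have inj : {in D &, injective f}.
  move=> [a b] [a' b'] /setXP[al /= /imsetP[w wl ->]] /setXP[al' /= /imsetP[w' wl' ->]].
  rewrite /f /= => E.
  have E2 : a - a' = w' / beta - w / beta.
    apply/eqP; rewrite -subr_eq0.
    have -> : a - a' - (w' / beta - w / beta) = (a + w / beta) - (a' + w' / beta) by ring.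
    by rewrite E subrr.
  have z0 : a - a' = 0.
    have inl : beta * (a - a') \in l.
      have -> : beta * (a - a') = w' - w by rewrite E2; field.
      by rewrite lB.
    move: (H (a - a')) => /=; rewrite inl andbT lB // andbT => /negbT; by rewrite negbK => /eqP.
  have aa : a = a' by apply/eqP; rewrite -subr_eq0 z0.
  move: E2; rewrite z0 aa => /eqP; rewrite eq_sym subr_eq0 => /eqP ->; by [].
have := max_card (f @: D); rewrite card_in_imset // cardsX lcard cl' cardL.
have [r ->] : exists r, q = r.+2 by exists (q - 2)%N; lia.
rewrite -expnD leq_exp2l //.
Qed.


Lemma Fq_card : (q <= #|subfieldq L q|)%N.
Proof.
pose A := [set alpha ^+ (val j * N) | j : 'I_(q - 1)].
have cA : #|A| = (q - 1)%N.
  rewrite card_imset ?card_ord // => j j' /eqP; rewrite aeq => /eqP.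
  have lt : forall k : 'I_(q - 1), (k * N < n)%N.
    by move=> k; rewrite nN ltn_pmul2r // /N addn1.
  rewrite !modn_small ?lt // => /eqP; rewrite eqn_pmul2r ?/N ?addn1 // => /eqP jj.
  exact: val_inj.
have A0 : (0 : L) \notin A.
  apply/imsetP => -[j _ /eqP]; by rewrite eq_sym expf_eq0 (negbTE alpha_neq0) andbF.
have sub : 0 |: A \subset subfieldq L q.
  apply/subsetP => x; rewrite !inE => /orP[/eqP -> | /imsetP[j _ ->]].
    by rewrite expr0n; case: q q2.
  by rewrite -inFq Fq_aN.
have := subset_leq_card sub; rewrite cardsU1 A0 cA.
rewrite /= add1n subn1 prednK //; exact: ltnW.
Qed.

Lemma key2 (x y : L) : x != 0 -> x \in l -> y \in l ->
  (forall c, c \in subfieldq L q -> y != c * x) ->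
  forall z, z \in l -> exists a b, [/\ a \in subfieldq L q, b \in subfieldq L q & z = a * x + b * y].
Proof.
move=> x0 xl yl ind z zl.
pose F := subfieldq L q.
pose g := fun pr : L * L => pr.1 * x + pr.2 * y.
have inj : {in setX F F &, injective g}.
  move=> [a b] [a' b'] /setXP[aF bF] /setXP[aF' bF']; rewrite /g /= => E.
  have E1 : (b' - b) * y = (a - a') * x.
    apply/eqP; rewrite -subr_eq0.
    have -> : (b' - b) * y - (a - a') * x = (a' * x + b' * y) - (a * x + b * y) by ring.
    by rewrite E subrr.
  have bb : b = b'.
    apply/eqP; apply/negPn/negP => nb.
    have nb' : b' - b != 0 by rewrite subr_eq0 eq_sym.
    have := ind ((a - a') / (b' - b)) (FqM (FqB aF aF') (FqV (FqB bF' bF))).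
    suff -> : y = ((a - a') / (b' - b)) * x by rewrite eqxx.
    by rewrite mulrAC -E1 mulrAC divff // mul1r.
  move: E1; rewrite bb subrr mul0r => /esym/eqP; rewrite mulf_eq0 (negbTE x0) orbF subr_eq0 => /eqP ->.
  by [].
have sub : g @: setX F F \subset l.
  apply/subsetP => _ /imsetP[[a b] /setXP[aF bF] ->]; rewrite /g /=.
  by rewrite lD // lZ.
have eq : g @: setX F F == l.
  rewrite eqEcard sub card_in_imset // cardsX lcard expnS expn1.
  by apply: leq_mul; apply: Fq_card.
move: zl; rewrite -(eqP eq) => /imsetP[[a b] /setXP[aF bF] ->].
by exists a, b.
Qed.


Variable t : nat.
Hypothesis Nt : (q ^ 2 + q + 1 = 3 * t)%N.

Lemma t_lt : (0 < t < N)%N.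
Proof. rewrite /N Nt; have := q2; have : (3 * t = q^2 + q + 1)%N by []; lia. Qed.

Lemma key4 i j : alpha ^+ i \in l -> alpha ^+ j \in l ->
  alpha ^+ (i + t) \in l -> alpha ^+ (j + t) \in l -> (i %% N != j %% N)%N -> False.
Proof.
move=> il jl itl jtl ij.
pose beta := alpha ^+ t; pose x := alpha ^+ i; pose y := alpha ^+ j.
have x0 : x != 0 by rewrite expf_neq0 // alpha_neq0.
have bx : beta * x = alpha ^+ (i + t) by rewrite -exprD addnC.
have by_ : beta * y = alpha ^+ (j + t) by rewrite -exprD addnC.
have yind : forall c, c \in subfieldq L q -> y != c * x.
  move=> c cF; apply/eqP => E; move: ij; by rewrite (Fq_detect cF E) eqxx.
have bl : forall z, z \in l -> beta * z \in l.
  move=> z zl; have [a [b [aF bF ->]]] := key2 x0 il jl yind zl.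
  by rewrite mulrDr (mulrCA beta a) (mulrCA beta b) bx by_ lD // lZ // -?by_ -?bx.
have bxl : beta * x \in l by rewrite bx.
have bx0 : beta * x != 0 by rewrite mulf_neq0 // expf_neq0 // alpha_neq0.
have bxind : forall c, c \in subfieldq L q -> beta * x != c * x.
  move=> c cF; apply/eqP; rewrite bx => E; have := Fq_detect cF E.
  move/eqP; rewrite addnC -{2}(add0n i) eqn_modDr mod0n modn_small; last by case/andP: t_lt.
  by case/andP: t_lt => /lt0n_neq0/negbTE ->.
have [a [b [aF bF E]]] := key2 x0 il bxl bxind (bl _ bxl).
move: aF bF; rewrite !inFq => aF bF.
have E2 : beta * beta = a + b * beta.
  apply: (mulIf x0); rewrite mulrDl -mulrA E; ring.
have E3 : beta ^+ q * beta ^+ q = a + b * beta ^+ q.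
  by rewrite -exprMn E2 frob exprMn (eqP aF) (eqP bF).
have bq2 : beta ^+ (q * q) = beta.
  have : (beta - beta ^+ q) * (beta + beta ^+ q - b) = 0.
    have -> : (beta - beta ^+ q) * (beta + beta ^+ q - b) =
      (beta * beta - (a + b * beta)) - (beta ^+ q * beta ^+ q - (a + b * beta ^+ q)) by ring.
    by rewrite E2 E3 !subrr.
  rewrite exprM; move/eqP; rewrite mulf_eq0 => /orP[|] /eqP H.
    have Hq : beta ^+ q = beta by apply/eqP; rewrite eq_sym -subr_eq0 H.
    by rewrite !Hq.
  have Hq : beta ^+ q = b - beta.
    apply/eqP; rewrite -subr_eq0.
    have -> : beta ^+ q - (b - beta) = beta + beta ^+ q - b by ring.
    by rewrite H.
  by rewrite Hq frobB (eqP bF) Hq opprB addrC subrK.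
move: bq2; rewrite /beta -exprM => /eqP; rewrite aeq.
have [r rq] : exists r, q = r.+2 by exists (q - 2)%N; lia.
have -> : (t * (q * q) = t + (q - 1) * (t * (q + 1)))%N.
  by rewrite rq subSS subn0; ring.
rewrite -{3}(addn0 t) eqn_modDl mod0n => /eqP H.
have : (n %| (q - 1) * (t * (q + 1)))%N by rewrite /dvdn H.
rewrite nN dvdn_pmul2l ?subn_gt0 // /N Nt mulnC dvdn_pmul2l; last by case/andP: t_lt.
move=> d3.
have : (3 %| q * (q + 1) + 1)%N.
  have -> : (q * (q + 1) + 1 = q ^ 2 + q + 1)%N by ring.
  by rewrite Nt dvdn_mulr.
by rewrite dvdn_addr ?dvdn_mull.
Qed.


Lemma N_gt0 : (0 < N)%N. Proof. by rewrite /N addn1. Qed.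

Lemma cardS : #|[set i : 'I_N | alpha ^+ i \in l]| = (q + 1)%N.
Proof.
pose S := [set i : 'I_N | alpha ^+ i \in l].
pose phi := fun pr : 'I_N * 'I_(q - 1) => alpha ^+ (pr.1 + pr.2 * N).
have lt : forall pr : 'I_N * 'I_(q - 1), (pr.1 + pr.2 * N < n)%N.
  move=> [[a Ha] [b Hb]] /=; rewrite nN; move: Ha Hb; move: N => M; nia.
have inj : injective phi.
  move=> [a b] [a' b']; rewrite /phi /= => /eqP; rewrite aeq (modn_small (lt (a,b))) (modn_small (lt (a',b'))) => /eqP E.
  have ea : a = a'.
    apply: val_inj => /=; move: (congr1 (fun k => k %% N)%N E).
    by rewrite ![(_ + _ * N)%N]addnC !modnMDl !modn_small.
  move: E; rewrite ea => /addnI /eqP; rewrite eqn_pmul2r ?N_gt0 // => /eqP eb.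
  by congr pair; apply: val_inj.
have im : phi @: setX S setT = l :\ 0.
  apply/setP => z; apply/imsetP/idP.
    move=> [[a b] /setXP[aS _] ->]; rewrite /phi /= !inE expf_neq0 ?alpha_neq0 //=.
    by rewrite memP addnC modnMDl modn_small //; move: aS; rewrite inE.
  rewrite !inE => /andP[z0 zl]; have [[k Hk] /= zk] := pow_of z0.
  have Hb : (k %/ N < q - 1)%N by rewrite ltn_divLR ?N_gt0 // -nN.
  exists (Ordinal (ltn_pmod k N_gt0), Ordinal Hb).
    by rewrite !inE /= -memP -zk zl.
  by rewrite /phi /= addnC -div.divn_eq.
have := cardsD1 0 l; rewrite l0 -im card_imset // cardsX cardsT card_ord lcard => /eqP.
move=> /eqP E.
have : ((q + 1) * (q - 1) = #|S| * (q - 1))%N.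
  move: E; rewrite /=; move: (#|S| * (q - 1))%N => X.
  have [r ->] : exists r, q = r.+2 by exists (q - 2)%N; lia.
  rewrite !subSS subn0; nia.
by move/eqP; rewrite eqn_pmul2r ?subn_gt0 // => /eqP.
Qed.

Lemma cardT : #|[set i : 'I_N | (alpha ^+ i \in l) && (alpha ^+ (i + t) \in l)]| = 1%N.
Proof.
have b0 : alpha ^+ t != 0 by rewrite expf_neq0 ?alpha_neq0.
have [z [z0 zl bzl]] := key1 b0.
have [[k Hk] /= zk] := pow_of z0.
pose i0 := Ordinal (ltn_pmod k N_gt0).
have i0T : (alpha ^+ i0 \in l) && (alpha ^+ (i0 + t) \in l).
  rewrite /= -memP -zk zl /=; rewrite (@memE _ (k + t)); first by rewrite addnC exprD -zk.
  by rewrite modnDml.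
suff -> : [set i : 'I_N | (alpha ^+ i \in l) && (alpha ^+ (i + t) \in l)] = [set i0] by rewrite cards1.
apply/setP => i; rewrite !inE; apply/idP/idP; last by move/eqP ->.
move=> /andP[il itl]; apply/eqP/val_inj/eqP/negP => /negP ne.
move/andP: i0T => [i0l i0tl].
apply: (key4 il i0l itl i0tl); rewrite !modn_small //.
Qed.

End Alg.

Local Close Scope ring_scope.

Lemma card_sum (T : finType) (P : pred T) : #|[set x | P x]| = \sum_(x : T) (P x : nat).
Proof.
rewrite -sum1_card big_mkcond; apply: eq_bigr => x _; rewrite inE; by case: (P x).
Qed.

Lemma modnDMr' m p d : ((m + p * d) %% d = m %% d)%N.
Proof. by rewrite addnC modnMDl. Qed.

Section Comb.
Local Open Scope nat_scope.
Variables (N t : nat) (g : nat -> bool).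
Hypothesis Nt : N = (3 * t)%N.
Hypothesis t0 : (0 < t)%N.
Hypothesis per : forall k, g k = g (k %% N).

Let w u := #|[set i : 'I_N | (i %% t == u) && g i]|.

Lemma inner u k : u < t ->
  \sum_(k * t <= j < k.+1 * t) (((j %% t == u) && g j) : nat) = g (u + k * t).
Proof.
move=> ut; rewrite -{1}(add0n (k * t)) big_addn mulSn addnK big_mkord.
rewrite (bigD1 (Ordinal ut)) //= big1 ?addn0.
  by rewrite modnDMr' modn_small // eqxx.
move=> j /eqP nj; rewrite modnDMr' modn_small //.
suff -> : (j == u :> nat) = false by [].
by apply/eqP => E; apply: nj; apply: val_inj.
Qed.

Lemma wE u : u < t -> w u = (g u + g (u + t) + g (u + 2 * t))%N.
Proof.
move=> ut; rewrite /w card_sum.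
rewrite -(big_mkord xpredT (fun i => (((i %% t == u) && g i) : nat))) Nt big_nat_mul.
rewrite big_mkord !big_ord_recl big_ord0 /= !inner //.
by rewrite mul0n addn0 mul1n addn0 addnA.
Qed.


Lemma comb : #|[set i : 'I_N | g i && g (i + t)]| = 1%N ->
  (forall u, u < t -> w u <= 2) /\ #|[set u : 'I_t | w u == 2]| = 1%N /\
  (#|[set u : 'I_t | w u == 1]| + 2 = #|[set i : 'I_N | g i]|)%N /\
  (#|[set u : 'I_t | w u == 0]| + #|[set u : 'I_t | w u == 1]| + 1 = t)%N.
Proof.
move=> /eqP/cards1P[i0 /setP Ti0].
have H1 : forall k, k < N -> (g k && g (k + t)) = (k == i0 :> nat).
  move=> k kN; have := Ti0 (Ordinal kN); rewrite !inE /= => ->.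
  by rewrite -(inj_eq val_inj).
have i0N : i0 < N by [].
have key : forall u, u < t -> (w u <= 2) /\ ((w u == 2) = (u == i0 %% t)).
  move=> u ut; rewrite wE //.
  have Ha := H1 u ltac:(lia).
  have Hb := H1 (u + t) ltac:(lia).
  have Hc := H1 (u + 2 * t) ltac:(lia).
  have gE : g (u + 2 * t + t) = g u.
    by rewrite per [g u]per (_ : u + 2 * t + t = u + 1 * N)%N ?modnDMr' //; lia.
  rewrite gE in Hc.
  rewrite (_ : u + t + t = u + 2 * t)%N in Hb; last lia.
  have E : (u == i0 %% t) = [|| u == i0, u + t == i0 | u + 2 * t == i0].
    have d3 : i0 %/ t < 3 by rewrite ltn_divLR // -Nt.
    have := div.divn_eq i0 t; have := ltn_pmod i0 t0.
    move: d3; move: (i0 %/ t) (i0 %% t) => d r.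
    case: d => [|[|[|//]]] _ rt ->; apply/eqP/idP; lia.
  rewrite E -Ha -Hb -Hc.
  have nabc : ~~ [&& g u, g (u + t) & g (u + 2 * t)].
    apply/negP => /and3P[x y z]; move: Ha Hb; rewrite x y z /= => /esym/eqP h1 /esym/eqP h2; lia.
  move: nabc; case: (g u); case: (g (u + t)); case: (g (u + 2 * t)) => //.
split.
  by move=> u ut; case: (key u ut).
split.
  rewrite (_ : [set u : 'I_t | w u == 2] = [set Ordinal (ltn_pmod i0 t0)]) ?cards1 //.
  apply/setP => u; rewrite !inE; case: (key u (ltn_ord u)) => _ ->.
  by rewrite -(inj_eq val_inj).
have sumw : \sum_(u : 'I_t) w u = (#|[set u : 'I_t | w u == 1]| + 2)%N.
  have cl : forall u : 'I_t, w u = ((w u == 1) + (w u == 2) + (w u == 2))%N.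
    move=> u; case: (key u (ltn_ord u)) => le2 _.
    by move: le2; case: (w u) => [|[|[|]]].
  rewrite (eq_bigr _ (fun u _ => cl u)) !big_split /= -!card_sum.
  rewrite (_ : [set u : 'I_t | w u == 2] = [set Ordinal (ltn_pmod i0 t0)]) ?cards1 -?addnA //.
  apply/setP => u; rewrite !inE; case: (key u (ltn_ord u)) => _ ->.
  by rewrite -(inj_eq val_inj).
split.
  rewrite -sumw -sum1_card.
  rewrite (partition_big (fun i : 'I_N => Ordinal (ltn_pmod i t0)) xpredT) //=.
  apply: eq_bigr => u _; rewrite /w card_sum [RHS]big_mkcond /=; apply: eq_bigr => i _.
  rewrite inE -(inj_eq val_inj) /= andbC; by case: (_ && _).
have cl : forall u : 'I_t, 1%N = ((w u == 0) + (w u == 1) + (w u == 2))%N.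
  move=> u; case: (key u (ltn_ord u)) => le2 _.
  by move: le2; case: (w u) => [|[|[|]]].
have c2 : #|[set u : 'I_t | w u == 2]| = 1%N.
  rewrite (_ : [set u : 'I_t | w u == 2] = [set Ordinal (ltn_pmod i0 t0)]) ?cards1 //.
  apply/setP => u; rewrite !inE; case: (key u (ltn_ord u)) => _ ->.
  by rewrite -(inj_eq val_inj).
transitivity (\sum_(u : 'I_t) 1)%N; last by rewrite sum1_card card_ord.
by rewrite (eq_bigr _ (fun u _ => cl u)) !big_split /= -!card_sum c2.
Qed.

End Comb.

Local Open Scope ring_scope.

Theorem proposition9 (p h : nat) (L : finFieldType) (alpha : L) (l : {set L}) :
  prime p -> (0 < h)%N ->
  #|L| = (p ^ (3 * h))%N ->
  (((p ^ h) ^ 3).-1).-primitive_root alpha ->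
  PG_line (p ^ h) l ->
  (* l is fixed by tau : P_i |-> P_(ip mod (q^2+q+1)) *)
  (forall i : nat, (i < (p ^ h) ^ 2 + p ^ h + 1)%N ->
     (alpha ^+ i \in l) = (alpha ^+ ((i * p) %% ((p ^ h) ^ 2 + p ^ h + 1)) \in l)) ->
  (3 %| (p ^ h) ^ 2 + p ^ h + 1)%N ->
  let q := (p ^ h)%N in
  let t := ((q ^ 2 + q + 1) %/ 3)%N in
  let w := wcount q t alpha l in
  (forall u, (u < t)%N -> (w u <= 2)%N) /\
  #|[set u : 'I_t | w u == 0%N]| = ((q ^ 2 - 2 * q + 1) %/ 3)%N /\
  #|[set u : 'I_t | w u == 1%N]| = (q - 1)%N /\
  #|[set u : 'I_t | w u == 2%N]| = 1%N.
Proof.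
move=> pr h0 cL prim line _ d3 q t w.
have q2 : (1 < q)%N.
  rewrite /q; apply: (leq_trans (prime_gt1 pr)).
  by rewrite -{1}(expn1 p) leq_pexp2l // prime_gt0.
have cardL : #|L| = (q ^ 3)%N by rewrite cL mulnC expnM.
have pc : p \in [pchar L] by apply: (card_finPcharP cL pr).
have frob : forall x y : L, (x + y) ^+ q = x ^+ q + y ^+ q.
  move=> x y; apply: exprDn_pchar; by rewrite /q pnatX (pnatE _ pr) pc.
have Nt : (q ^ 2 + q + 1 = 3 * t)%N by rewrite /t mulnC divnK.
have t0 : (0 < t)%N by have := Nt; lia.
have HS := cardS q2 cardL prim line Nt.
have HT := cardT q2 cardL prim frob line Nt.
have [H1 [H2 [H3 H4]]] := @comb _ _ (fun k => alpha ^+ k \in l) Nt t0 (memP q2 cardL prim line) HT.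
rewrite HS in H3.
have sq : (2 * q <= q ^ 2)%N by rewrite expnS expn1 leq_mul2r q2 orbT.
rewrite /w /wcount.
split; first exact: H1.
split; last by split; [lia | exact: H2].
have -> : (q ^ 2 - 2 * q + 1 = 3 * (t - q))%N by lia.
rewrite mulKn //; lia.
Qed.
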